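(* Let $T$ be a compact metric space, let $\eta$ be a sample-continuous max-infinitely divisible process on $T$ with vertex function identically $0$ and exponent measure $\mu$, and $\Phi$ a Poisson random measure on $\mathbb{C}_0$ with intensity $\mu$ with $\eta=\max(\Phi)$. Let $K\subset T$ be closed. Then the $K$-extremal point measure $\Phi_K^+$ is the unique sub-point measure $\tilde\Phi$ of $\Phi$ such that $$\tilde\Phi\in C_K^+\quad\text{and}\quad\Phi-\tilde\Phi\in C_K^-(\max(\tilde\Phi)).$$
   Context: $\mathbb{C}_0$ is the set of continuous $f:T\to[0,\infty)$ not identically zero (sup norm). $M_p(\mathbb{C}_0)$ is the set of point measures $M=\sum_{i\in I}\delta_{f_i}$ on $\mathbb{C}_0$ with $\{i:\|f_i\|>\varepsilon\}$ finite for all $\varepsilon>0$; $[M]$ is its set of atoms and $\max(M)(s)=\max\{f(s):f\in[M]\}$ ($0$ if $M=0$). $M_1$ is a sub-point measure of $M_2$ if $M_2-M_1\in M_p(\mathbb{C}_0)$. The vertex function is $h(t)=\sup\{x:\mathbb P(\eta(t)\ge x)=1\}$; the exponent measure $\mu$ is a Borel measure on $\mathbb{C}_0$ with $\mu(\{\|f\|>\varepsilon\})<\infty$ for all $\varepsilon>0$ and $\mathbb P[\eta(K_i)<x_i,i\le n]=\exp[-\mu(\cup_i\{f(K_i)\ge x_i\})]$. For $f,g$ on $K$: $f<_Kg$ iff $f(s)<g(s)$ for all $s\in K$; $f\not<_Kg$ otherwise. $\Phi_K^+$ is the restriction of $\Phi$ to its atoms $\phi$ with $\phi\not<_K\eta$.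 $C_K^+=\{M:\forall f\in[M],\ f\not<_K\max(M)\}$ and $C_K^-(g)=\{M:\forall f\in[M],\ f<_Kg\}$. *)

(* Defs.v *)
From mathcomp Require Import all_boot all_order all_algebra.
From mathcomp Require Import all_classical all_reals all_analysis measurable_realfun.
Import Order.TTheory GRing.Theory Num.Theory numFieldNormedType.Exports.

Set Implicit Arguments.
Unset Strict Implicit.
Unset Printing Implicit Defensive.

Local Open Scope classical_set_scope.
Local Open Scope ring_scope.

Section MaxID.
Context {R : realType} {T : pseudoMetricType R}.

Definition C0 : set (T -> R) :=
  [set f : T -> R | continuous f /\ (forall t, 0 <= f t) /\ exists t, f t != 0].

Definition supnorm_gt (f : T -> R) (e : R) : Prop := exists t, e < `|f t|.

Definition supdist_lt (f g : T -> R) (e : R) : Prop :=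
  exists2 r, r < e & forall t, `|f t - g t| <= r.

(* A point measure sum_i delta_{f_i} is represented by its multiplicity
   function m : (T -> R) -> nat (m f = number of indices i with f_i = f). *)
Definition atoms (m : (T -> R) -> nat) : set (T -> R) := [set f | (0 < m f)%N].

Definition pointmeasure (m : (T -> R) -> nat) : Prop :=
  atoms m `<=` C0 /\
  forall e, 0 < e -> finite_set [set f | atoms m f /\ supnorm_gt f e].

Definition maxPM (m : (T -> R) -> nat) (s : T) : R :=
  sup ([set f s | f in atoms m] `|` [set 0]).

Definition subPM (m1 m2 : (T -> R) -> nat) : Prop :=
  pointmeasure m1 /\ (forall f, m1 f <= m2 f)%N /\
  pointmeasure (fun f => m2 f - m1 f)%N.

Definition ltK (K : set T) (f g : T -> R) : Prop := forall s, K s -> f s < g s.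

Definition extremalK (K : set T) (eta : T -> R) (m : (T -> R) -> nat) :
  (T -> R) -> nat :=
  fun f => if `[< ~ ltK K f eta >] then m f else 0%N.

Definition CKplus (K : set T) (m : (T -> R) -> nat) : Prop :=
  pointmeasure m /\ forall f, atoms m f -> ~ ltK K f (maxPM m).

Definition CKminus (K : set T) (g : T -> R) (m : (T -> R) -> nat) : Prop :=
  pointmeasure m /\ forall f, atoms m f -> ltK K f g.

Definition C0_open (A : set (T -> R)) : Prop :=
  A `<=` C0 /\
  forall f, A f -> exists2 e, 0 < e & forall g, C0 g -> supdist_lt f g e -> A g.

Definition C0_borel : set (set (T -> R)) := <<s C0, C0_open >>.

(* f(K) = sup_{s in K} f(s)  (-oo if K is empty) *)
Definition supK (f : T -> R) (K : set T) : \bar R :=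
  ereal_sup ((fun s => (f s)%:E) @` K).

Context {d : measure_display} {Omega : measurableType d}.

Definition vertex (P : probability Omega R) (eta : Omega -> T -> R) (t : T)
  : \bar R :=
  ereal_sup [set x%:E | x in [set x | P [set w | x <= eta w t] = 1%E]].

(* max-infinite divisibility: for every n >= 1, eta has the same finite
   dimensional distributions as the pointwise maximum of n i.i.d. processes *)
Definition max_inf_div (P : probability Omega R) (eta : Omega -> T -> R) : Prop :=
  forall n : nat, (0 < n)%N ->
  exists (d' : measure_display) (O' : measurableType d') (P' : probability O' R)
         (zeta : 'I_n -> O' -> T -> R),
    (forall i t, measurable_fun setT (fun w => zeta i w t)) /\
    (forall (k : nat) (ts : 'I_k -> T) (x : 'I_n -> 'I_k -> R),
       P' (\bigcap_(i in [set: 'I_n]) [set w | forall j, zeta i w (ts j) <= x i j])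
       = (\prod_(i < n) P' [set w | forall j, (zeta i w (ts j) <= x i j)%R])%E) /\
    (forall (k : nat) (ts : 'I_k -> T) (x : 'I_k -> R) (i i' : 'I_n),
       P' [set w | forall j, zeta i w (ts j) <= x j]
       = P' [set w | forall j, zeta i' w (ts j) <= x j]) /\
    (forall (k : nat) (ts : 'I_k -> T) (x : 'I_k -> R),
       P [set w | forall j, eta w (ts j) <= x j]
       = P' [set w | forall j, forall i, zeta i w (ts j) <= x j]).

Definition C0_measure (mu : set (T -> R) -> \bar R) : Prop :=
  mu set0 = 0%E /\ (forall A, C0_borel A -> (0 <= mu A)%E) /\
  forall F : nat -> set (T -> R), (forall n, C0_borel (F n)) -> trivIset setT F ->
    (fun n => (\sum_(0 <= i < n) mu (F i))%E) @ \oo --> mu (\bigcup_n F n).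

Definition exponent_measure (P : probability Omega R) (eta : Omega -> T -> R)
  (mu : set (T -> R) -> \bar R) : Prop :=
  C0_measure mu /\
  (forall e, 0 < e -> (mu (C0 `&` [set f | supnorm_gt f e]) < +oo)%E) /\
  forall (n : nat) (K : 'I_n -> set T) (x : 'I_n -> R),
    (forall i, closed (K i)) -> (forall i, 0 < x i) ->
    P (\bigcap_(i in [set: 'I_n]) [set w | (supK (eta w) (K i) < (x i)%:E)%E])
    = (expR (- fine (mu (C0 `&` \bigcup_(i in [set: 'I_n])
                                   [set f | ((x i)%:E <= supK f (K i))%E]))))%:E.

Definition pm_count (Phi : Omega -> (T -> R) -> nat) (A : set (T -> R)) (w : Omega)
  : \bar R := \esum_(f in A) ((Phi w f)%:R)%:E.

Definition poisson_rm (P : probability Omega R) (Phi : Omega -> (T -> R) -> nat)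
  (mu : set (T -> R) -> \bar R) : Prop :=
  (forall w, pointmeasure (Phi w)) /\
  (forall A, C0_borel A -> measurable_fun setT (fun w => pm_count Phi A w : \bar R)) /\
  forall (n : nat) (A : 'I_n -> set (T -> R)) (k : 'I_n -> nat),
    (forall i, C0_borel (A i)) -> (forall i, (mu (A i) < +oo)%E) ->
    trivIset setT A ->
    P (\bigcap_(i in [set: 'I_n]) [set w | pm_count Phi (A i) w = ((k i)%:R)%:E])
    = (\prod_(i < n)
         (expR (- fine (mu (A i))) * fine (mu (A i)) ^+ k i / ((k i)`!)%:R)%:E)%E.

End MaxID.

(* Main.v *)
Require Import Defs.
From mathcomp Require Import all_boot all_order all_algebra.
From mathcomp Require Import all_classical all_reals all_analysis measurable_realfun.
Import Order.TTheory GRing.Theory Num.Theory numFieldNormedType.Exports.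
Local Open Scope classical_set_scope.
Local Open Scope ring_scope.
Set Implicit Arguments.
Lemma seq_max (R : realType) (s : seq R) : s != [::] ->
  exists2 x, x \in s & forall y, y \in s -> y <= x.
Proof.
elim: s => // a [|b s] IH _.
  by exists a; rewrite ?mem_seq1 // => y; rewrite mem_seq1 => /eqP ->.
have [x xs xmax] := IH isT.
have [ax|xa] := leP a x.
  exists x; first by rewrite in_cons xs orbT.
  by move=> y; rewrite in_cons => /orP[/eqP ->//|]; exact: xmax.
exists a; first by rewrite in_cons eqxx.
move=> y; rewrite in_cons => /orP[/eqP ->//|/xmax yx]; exact: (le_trans yx (ltW xa)).
Qed.

Lemma fin_max (R : realType) (A : set R) : finite_set A -> A !=set0 ->
  exists2 x, A x & forall y, A y -> y <= x.
Proof.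
move=> /finite_seqP[s ->] [a Aa].
have : s != [::] by case: s Aa.
move=> /seq_max[x xs xm]; exists x => // y; exact: xm.
Qed.
Section S.
Context {R : realType} {T : pseudoMetricType R}.
Implicit Types (m : (T -> R) -> nat).

Definition SS m (s : T) : set R := [set f s | f in atoms m] `|` [set 0].

Lemma SS_ub m s e : 0 < e -> pointmeasure m ->
  exists2 x, (x = e \/ exists2 g, atoms m g /\ supnorm_gt g e & g s = x) &
    forall y, SS m s y -> y <= x.
Proof.
move=> e0 [_ pmf].
pose A := [set g s | g in [set g | atoms m g /\ supnorm_gt g e]] `|` [set e].
have finA : finite_set A.
  rewrite /A finite_setU; split; last exact: finite_set1.
  by apply: finite_image; apply: pmf.
have [x Ax xm] := @fin_max R A finA (ex_intro _ e (or_intror erefl)).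
exists x.
  case: Ax => [[g Hg <-]|->]; [right; by exists g|by left].
have ex : e <= x by apply: xm; right.
move=> y [[g ag <-]|->]; last exact: le_trans (ltW e0) ex.
have [sg|nsg] := pselect (supnorm_gt g e).
  by apply: xm; left; exists g.
have : `|g s| <= e by rewrite leNgt; apply/negP => H; apply: nsg; exists s.
move=> H; exact: le_trans (le_trans (ler_norm _) H) ex.
Qed.

Lemma SS_hs m s : pointmeasure m -> has_sup (SS m s).
Proof.
move=> pm; split; first by exists 0; right.
have [x _ xm] := @SS_ub m s 1 ltr01 pm; by exists x => y /xm.
Qed.

Lemma maxPM_ub m s g : pointmeasure m -> atoms m g -> g s <= maxPM m s.
Proof.
move=> pm ag; have /sup_upper_bound/ubP := @SS_hs m s pm; apply; left; by exists g.
Qed.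

Lemma maxPM_ge0 m s : pointmeasure m -> 0 <= maxPM m s.
Proof.
move=> pm; have /sup_upper_bound/ubP := @SS_hs m s pm; apply; by right.
Qed.

Lemma maxPM_mono m1 m2 s : pointmeasure m2 -> atoms m1 `<=` atoms m2 ->
  maxPM m1 s <= maxPM m2 s.
Proof.
move=> pm sub; apply: ge_sup; first by exists 0; right.
move=> y [[g ag <-]|->]; [exact: maxPM_ub (sub _ ag)|exact: maxPM_ge0].
Qed.

Lemma maxPM_att m s : pointmeasure m -> 0 < maxPM m s ->
  exists2 g, atoms m g & g s = maxPM m s.
Proof.
move=> pm M0; set M := maxPM m s.
have e0 : 0 < M / 2 by rewrite divr_gt0.
have eM : M / 2 < M by rewrite ltr_pdivrMr // ltr_pMr // ltr1n.
have [x Hx xm] := @SS_ub m s (M/2) e0 pm.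
have Mx : M <= x.
  apply: ge_sup; first by exists 0; right.
  by move=> y /xm.
case: Hx => [xe|[g [ag _] gx]].
  by move: (lt_le_trans eM Mx); rewrite xe ltxx.
exists g => //; apply/eqP; rewrite eq_le gx Mx andbT -gx; exact: maxPM_ub.
Qed.

End S.
Theorem lemma1 (R : realType) (T : pseudoMetricType R)
  (d : measure_display) (Omega : measurableType d) (P : probability Omega R)
  (eta : Omega -> T -> R) (mu : set (T -> R) -> \bar R)
  (Phi : Omega -> (T -> R) -> nat) (K : set T) :
  hausdorff_space T -> compact [set: T] ->
  (forall w, continuous (eta w)) ->
  (forall t, measurable_fun setT (fun w => eta w t)) ->
  max_inf_div P eta ->
  (forall t, vertex P eta t = 0%E) ->
  exponent_measure P eta mu ->
  poisson_rm P Phi mu ->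
  (forall w, eta w = maxPM (Phi w)) ->
  closed K ->
  forall (w : Omega) (Phit : (T -> R) -> nat),
    (subPM Phit (Phi w) /\ CKplus K Phit /\
     CKminus K (maxPM Phit) (fun f => Phi w f - Phit f)%N)
    <-> Phit = extremalK K (eta w) (Phi w).
Proof.
move=> _ _ _ _ _ _ _ [pmPhi _] etaE _ w Phit.
rewrite etaE; have pm := pmPhi w; move: (Phi w) pm => m pm {etaE pmPhi}.
have pm_sub : forall m', atoms m' `<=` atoms m -> pointmeasure m'.
  move=> m' sub; split; first by move=> f /sub; apply: pm.1.
  move=> e e0; apply: sub_finite_set (pm.2 e e0) => f [af sf]; split => //.
  exact: sub.
split.
- move=> [[pmT [le _]] [[_ Hp] [_ Hm]]].
  have eqK : forall s, K s -> maxPM Phit s = maxPM m s.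
    move=> s Ks; apply/eqP; rewrite eq_le; apply/andP; split.
      apply: maxPM_mono => // f; rewrite /atoms /= => H.
      exact: leq_trans H (le f).
    apply: ge_sup; first by exists 0; right.
    move=> y [[g ag <-]|->]; last exact: maxPM_ge0.
    have [Pg|] := ltnP 0 (Phit g); first exact: maxPM_ub.
    rewrite leqn0 => /eqP Pg0.
    apply: ltW; apply: Hm => //; rewrite /atoms /= Pg0 subn0; exact: ag.
  apply: funext => f; rewrite /extremalK; case: asboolP => H.
    have Hd : (m f - Phit f = 0)%N.
      apply/eqP; apply: contraT; rewrite -lt0n => Hd; exfalso; apply: H.
      move=> s Ks; rewrite -eqK //; exact: Hm.
    by apply/eqP; rewrite eqn_leq le /= -subn_eq0 Hd.
  apply/eqP; apply: contraT; rewrite -lt0n => Hp0; exfalso.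
  apply: (Hp f Hp0) => s Ks; rewrite eqK //; exact: (contrapT H).
- move=> ->; set E := extremalK K (maxPM m) m.
  have EsubA : atoms E `<=` atoms m.
    by move=> f; rewrite /atoms /E /extremalK /=; case: asboolP.
  have pmE : pointmeasure E by exact: pm_sub.
  have DsubA : atoms (fun f => m f - E f)%N `<=` atoms m.
    move=> f; rewrite /atoms /= => H; apply: leq_trans H _; exact: leq_subr.
  have pmD : pointmeasure (fun f => m f - E f)%N by exact: pm_sub.
  split; [|split].
  + split => //; split => // f; rewrite /E /extremalK; by case: asboolP.
  + split => // f; rewrite /atoms /E /extremalK /=; case: asboolP => // H _ H2.
    apply: H => s Ks; apply: lt_le_trans (H2 s Ks) _; exact: maxPM_mono.
  + split => // f; rewrite /atoms /E /extremalK /=; case: asboolP => H.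
      by rewrite subnn.
    rewrite subn0 => af.
    have Hlt : ltK K f (maxPM m) by apply: contrapT.
    move=> s Ks.
    have f0 : 0 <= f s by have [_ [+ _]] := pm.1 f af; apply.
    have [g ag gs] := @maxPM_att R T m s pm (le_lt_trans f0 (Hlt s Ks)).
    have gE : atoms E g.
      rewrite /atoms /E /extremalK /=; case: asboolP => [_|Hn]; first exact: ag.
      by have := contrapT Hn s Ks; rewrite gs ltxx.
    by apply: lt_le_trans (Hlt s Ks) _; rewrite -gs; exact: maxPM_ub.
Qed.
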